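(* Let $G$ and $H$ be finite simple connected graphs of order at least $3$. If the direct product $G \times H$ is well-dominated, then every minimum dominating set of $G$ and every minimum dominating set of $H$ is an independent set.
   Context: A graph is well-dominated if every minimal (with respect to inclusion) dominating set is a minimum dominating set. The direct product $G\times H$ has vertex set $V(G)\times V(H)$, with $(g_1,h_1)$ adjacent to $(g_2,h_2)$ iff $g_1g_2\in E(G)$ and $h_1h_2\in E(H)$. *)

(* Defs.v *)
From mathcomp Require Import all_boot.
Set Implicit Arguments. Unset Strict Implicit. Unset Printing Implicit Defensive.

Definition simple_graph (T : finType) (e : rel T) : Prop :=
  symmetric e /\ irreflexive e.

Definition connected_graph (T : finType) (e : rel T) : Prop :=
  forall x y : T, connect e x y.

Definition dominating (T : finType) (e : rel T) (D : {set T}) : Prop :=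
  forall v : T, v \in D \/ exists2 u, u \in D & e v u.

Definition minimal_dominating (T : finType) (e : rel T) (D : {set T}) : Prop :=
  dominating e D /\ forall D' : {set T}, D' \proper D -> ~ dominating e D'.

Definition minimum_dominating (T : finType) (e : rel T) (D : {set T}) : Prop :=
  dominating e D /\ forall D' : {set T}, dominating e D' -> #|D| <= #|D'|.

Definition well_dominated (T : finType) (e : rel T) : Prop :=
  forall D : {set T}, minimal_dominating e D -> minimum_dominating e D.

Definition independent (T : finType) (e : rel T) (S : {set T}) : Prop :=
  forall u v, u \in S -> v \in S -> ~~ e u v.

Definition direct_prod (T1 T2 : finType) (e1 : rel T1) (e2 : rel T2)
  : rel (T1 * T2)%type :=
  fun x y => e1 x.1 y.1 && e2 x.2 y.2.

(* Main.v *)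
Require Import Defs.
From mathcomp Require Import all_boot zify.
Set Implicit Arguments. Unset Strict Implicit.

Lemma nbr_exists (T : finType) (e : rel T) :
  connected_graph e -> 2 <= #|T| -> forall h, exists z, e h z.
Proof.
move=> Hc H2 h.
have: 0 < #|[set~ h]| by rewrite cardsC1; case: #|T| H2 => // n; rewrite subn1.
case/card_gt0P=> w; rewrite !inE => hw.
have /connectP [p Hp Hl] := Hc h w.
case: p Hp Hl => [|a p] /=; first by move=> _ E; rewrite E eqxx in hw.
by case/andP=> ha _ _; exists a.
Qed.

Lemma good_x (T : finType) (e : rel T) :
  simple_graph e -> connected_graph e -> 3 <= #|T| ->
  exists x, forall h, exists2 z, e h z & z != x.
Proof.
move=> [Hs Hi] Hc H3.
have Hn := nbr_exists Hc (ltnW H3).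
case: (boolP [exists y, #|[set z | e y z]| == 1]).
- case/existsP=> x /cards1P [y Ny].
  have Exz : forall z, e x z = (z == y).
    by move=> z; rewrite -in_set1 -Ny inE.
  exists x => h.
  case: (eqVneq h y) => [->|hy].
  + case: (boolP [exists z, e y z && (z != x)]).
      by case/existsP=> z /andP [? ?]; exists z.
    rewrite negb_exists => /forallP Hall.
    have Eyz : forall z, e y z -> z = x.
      by move=> z ez; move: (Hall z); rewrite ez /= negbK => /eqP.
    pose A := [set x; y].
    have cl : closed e A.
      move=> a b eab; rewrite !inE.
      have eba : e b a by rewrite Hs.
      case: (eqVneq a x) => [ax|ax].
        by subst a; move: eab; rewrite Exz => ->; rewrite orbT.
      case: (eqVneq a y) => [ay|ay].
        by subst a; rewrite (Eyz b eab) eqxx.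
      case: (eqVneq b x) => [bx|bx].
        by subst b; move: eba; rewrite Exz (negbTE ay).
      case: (eqVneq b y) => [by_|by_] //.
      by subst b; rewrite (Eyz a eba) eqxx in ax.
    have: 0 < #|~: A|.
      have HA : #|A| <= 2 by rewrite cards2; case: (x != y).
      rewrite -(ltn_add2l #|A|) addn0 cardsC.
      exact: leq_ltn_trans HA H3.
    case/card_gt0P=> w; rewrite inE => wA.
    have := closed_connect cl (Hc x w).
    by rewrite (negbTE wA) !inE eqxx.
  + have [n hn] := Hn h; exists n => //.
    apply/eqP => nx; subst n.
    by move: hy; rewrite -Exz Hs hn.
- rewrite negb_exists => /forallP Hall.
  have [x _] : exists x : T, x \in T by apply/card_gt0P; apply: leq_trans H3.
  exists x => h.
  have [n hn] := Hn h.
  have H2 : 1 < #|[set z | e h z]|.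
    have: 0 < #|[set z | e h z]| by apply/card_gt0P; exists n; rewrite inE.
    by move: (Hall h); case: #|_| => [|[|]].
  have := cardsD1 x [set z | e h z].
  have: 0 < #|[set z | e h z] :\ x|.
    move: H2; rewrite (cardsD1 x); case: (x \in _) => //=; by case: #|_|.
  case/card_gt0P=> z; rewrite !inE => /andP [zx ez] _.
  by exists z.
Qed.

Lemma max_indep (T : finType) (e : rel T) : simple_graph e ->
  exists I : {set T}, independent e I /\ dominating e I.
Proof.
move=> [Hs Hi].
pose P := fun I : {set T} => [forall u in I, forall v in I, ~~ e u v].
have P0 : P set0 by apply/forallP=> u; rewrite inE.
have [I /maxsetP [PI Imax] _] := maxset_exists P0.
have indI : independent e I.
  move=> u v uI vI; move/forallP: PI => /(_ u); rewrite uI /= => /forallP /(_ v).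
  by rewrite vI.
exists I; split => // v.
case: (boolP (v \in I)) => vI; first by left.
right.
case: (boolP [exists u in I, e v u]); first by case/existsP=> u /andP [? ?]; exists u.
rewrite negb_exists => /forallP Hn.
have PvI : P (v |: I).
  apply/forallP=> a; apply/implyP; rewrite !inE => /orP [/eqP ->|aI];
  apply/forallP=> b; apply/implyP; rewrite !inE => /orP [/eqP ->|bI].
  - by rewrite Hi.
  - by move: (Hn b); rewrite bI.
  - by rewrite Hs; move: (Hn a); rewrite aI.
  - exact: indI.
have := Imax _ PvI (subsetUr _ _).
move/setP/(_ v); rewrite !inE eqxx /= => E.
by rewrite -E in vI.
Qed.

Lemma key (T1 T2 P : finType) (e1 : rel T1) (e2 : rel T2) (E : rel P)
  (mk : T1 -> T2 -> P) (p1 : P -> T1) (p2 : P -> T2) :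
  (forall a b, p1 (mk a b) = a) -> (forall a b, p2 (mk a b) = b) ->
  (forall p, mk (p1 p) (p2 p) = p) ->
  (forall p q, E p q = e1 (p1 p) (p1 q) && e2 (p2 p) (p2 q)) ->
  simple_graph e1 -> simple_graph e2 -> connected_graph e2 -> 3 <= #|T2| ->
  well_dominated E ->
  forall D, minimum_dominating e1 D -> independent e1 D.
Proof.
move=> E1 E2 Emk EE [Hs1 Hi1] G2 C2 H3 WD D [domD minD] u v uD vD.
apply/negP => euv.
have [x Hx] := good_x G2 C2 H3.
have Hn := nbr_exists C2 (ltnW H3).
have [I [indI domI]] := max_indep (conj Hs1 Hi1).
have cardpre : forall A : {set T1}, #|[set p | p1 p \in A]| = #|A| * #|T2|.
  move=> A; rewrite -cardsT -cardsX.
  have -> : [set p | p1 p \in A] = [set mk q.1 q.2 | q in setX A setT].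
    apply/setP=> p; rewrite inE; apply/idP/imsetP.
      by move=> pA; exists (p1 p, p2 p); rewrite ?inE ?pA ?Emk.
    by case=> q; rewrite !inE andbT => qA ->; rewrite E1.
  apply: card_imset; case=> a b; case=> c d /= Eq.
  by have := congr1 p1 Eq; have := congr1 p2 Eq; rewrite !E1 !E2 => -> ->.
pose AI := [set p | p1 p \in I].
have minAI : minimal_dominating E AI.
  split => [p|].
    case: (boolP (p1 p \in I)) => pI; first by left; rewrite inE.
    right; case: (domI (p1 p)) => [pI'|[i iI ei]]; first by rewrite pI' in pI. have [h eh] := Hn (p2 p).
    by exists (mk i h); [rewrite inE E1 | rewrite EE E1 E2 ei eh].
  move=> D' /properP [sub [q qA qD']] dom'.
  case: (dom' q) => [qD|[r rD' eqr]]; first by rewrite qD in qD'.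
  have rA := subsetP sub r rD'.
  rewrite inE in qA; rewrite inE in rA.
  by move: eqr; rewrite EE (negbTE (indI _ _ qA rA)).
have [_ minAI'] := WD _ minAI.
pose S := [set p | p1 p \in D] :\ mk u x.
have domS : dominating E S.
  move=> p; case: (boolP (p1 p \in D)) => pD.
    case: (eqVneq p (mk u x)) => [->|px]; last by left; rewrite !inE px pD.
    right; have [h eh] := Hn x.
    exists (mk v h); last by rewrite EE !E1 !E2 euv eh.
    rewrite !inE E1 vD andbT; apply/eqP => Eq.
    by move: (congr1 p1 Eq); rewrite !E1 => Evu; rewrite Evu Hi1 in euv.
  right; case: (domD (p1 p)) => [pD'|[d dD ed]]; first by rewrite pD' in pD. have [h eh hx] := Hx (p2 p).
  exists (mk d h); last by rewrite EE E1 E2 ed eh.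
  rewrite !inE E1 dD andbT; apply/eqP => Eq.
  by move: (congr1 p2 Eq); rewrite !E2 => Ehx; rewrite Ehx eqxx in hx.
have := minAI' _ domS.
have cS : #|S| = (#|D| * #|T2|).-1.
  have := cardsD1 (mk u x) [set p | p1 p \in D].
  by rewrite cardpre inE E1 uD add1n => ->.
rewrite cS cardpre.
have DI := minD _ domI.
have M := leq_mul DI (leqnn #|T2|).
have D0 : 0 < #|D| by apply/card_gt0P; exists u.
have T0 : 0 < #|T2| by apply: leq_trans H3.
have DT : 0 < #|D| * #|T2| by rewrite muln_gt0 D0 T0.
move: M DT; clear. lia.
Qed.

Theorem corollary12 (T1 T2 : finType) (e1 : rel T1) (e2 : rel T2) :
  simple_graph e1 -> simple_graph e2 ->
  connected_graph e1 -> connected_graph e2 ->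
  3 <= #|T1| -> 3 <= #|T2| ->
  well_dominated (direct_prod e1 e2) ->
  (forall D : {set T1}, minimum_dominating e1 D -> independent e1 D) /\
  (forall D : {set T2}, minimum_dominating e2 D -> independent e2 D).
Proof.
move=> G1 G2 C1 C2 H1 H2 WD; split.
- apply: (@key T1 T2 _ e1 e2 (direct_prod e1 e2) (fun a b => (a, b)) fst snd) => //.
  by case.
- apply: (@key T2 T1 _ e2 e1 (direct_prod e1 e2) (fun a b => (b, a)) snd fst) => //.
    by case.
  by move=> p q; rewrite /direct_prod andbC.
Qed.
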